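(* Let $k$ be an odd integer with $k\ge 5$, let $D$ be a strong $k$-quasi-transitive digraph with $\mathrm{diam}(D)\ge k+2$, let $u,v\in V(D)$ with $d(u,v)=k+2$, and let $P$ be a shortest $(u,v)$-path in $D$. Then $D[V(P)]$ is either a semicomplete digraph or a semicomplete bipartite digraph.
   Context: All digraphs are finite, without loops or multiple arcs (opposite arcs allowed). Vertices $x,y$ are adjacent if $xy$ or $yx$ is an arc. For $k\ge 2$, $D$ is $k$-quasi-transitive if for every path $x_0x_1\ldots x_k$ of length $k$, $x_0$ and $x_k$ are adjacent. $d(x,y)$ is the length of a shortest $(x,y)$-path, $\mathrm{diam}(D)=\max_{x,y}d(x,y)$. $D[S]$ is the induced subdigraph. A semicomplete digraph: every two distinct vertices adjacent. A semicomplete bipartite digraph: there is a bipartition $(X,Y)$ of the vertex set with no arcs inside $X$ or $Y$ and every vertex of $X$ adjacent to every vertex of $Y$. *)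

(* Defs.v *)
(* Loops are excluded
   by the hypothesis [irreflexive arc]; multiple arcs cannot occur for a
   relation; opposite arcs are allowed. *)
From mathcomp Require Import all_boot.
Set Implicit Arguments. Unset Strict Implicit. Unset Printing Implicit Defensive.

Section Digraphs.
Variable V : finType.
Variable arc : rel V.

Definition adjacent (x y : V) : bool := arc x y || arc y x.

Definition dipath (x : V) (p : seq V) (y : V) (n : nat) : bool :=
  [&& path arc x p, uniq (x :: p), last x p == y & size p == n].

Definition quasi_transitive (k : nat) : Prop :=
  forall (x : V) (p : seq V) (y : V), dipath x p y k -> adjacent x y.

Definition dist_is (x y : V) (n : nat) : Prop :=
  (exists p, dipath x p y n) /\
  (forall (p : seq V) (m : nat), dipath x p y m -> n <= m).

Definition strong : Prop :=
  forall x y : V, exists (p : seq V) (n : nat), dipath x p y n.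

Definition diam_ge (m : nat) : Prop :=
  exists (x y : V) (n : nat), dist_is x y n /\ m <= n.

Definition semicomplete_on (S : seq V) : Prop :=
  forall x y, x \in S -> y \in S -> x != y -> adjacent x y.

(* D[S] is semicomplete bipartite: there is a bipartition (X,Y) of S
   (X = members of S with side true, Y = those with side false) with no arc
   inside X or inside Y and every vertex of X adjacent to every vertex of Y. *)
Definition semicomplete_bipartite_on (S : seq V) : Prop :=
  exists side : V -> bool,
    forall x y, x \in S -> y \in S ->
      (side x == side y -> ~~ arc x y) /\
      (side x != side y -> adjacent x y).

End Digraphs.

(* Main.v *)
Require Import Defs.
From mathcomp Require Import all_boot zify.
Set Implicit Arguments. Unset Strict Implicit. Unset Printing Implicit Defensive.

Definition seg (r : nat * nat) : seq nat := iota r.1 (r.2 - r.1).+1.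
Definition verts (rs : seq (nat * nat)) : seq nat := flatten (map seg rs).
Definition disj (r r' : nat * nat) : bool := [&& r.1 <= r.2, r'.1 <= r'.2 & (r.2 < r'.1) || (r'.2 < r.1)].

Lemma disj_has r r' : disj r r' -> ~~ has (mem (seg r)) (seg r').
Proof.
move=> H; apply/hasPn => z; rewrite /seg !mem_iota => /andP [H1 H2].
have -> : mem (iota r.1 (r.2 - r.1).+1) z = (z \in iota r.1 (r.2 - r.1).+1) by []. rewrite mem_iota; move: H; rewrite /disj; lia.
Qed.

Lemma uniq_verts_cons r rs : all (disj r) rs -> uniq (verts rs) -> uniq (verts (r :: rs)).
Proof.
move=> Hall Hu.
have -> : verts (r :: rs) = seg r ++ verts rs by [].
rewrite cat_uniq Hu andbT /seg iota_uniq /= -/(seg r).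
apply/hasPn => z; rewrite /verts => /flattenP [s /mapP [r' Hr' ->]] Hz.
apply/negP => Hz'.
have := disj_has (allP Hall r' Hr'); move/hasPn => /(_ z Hz). by move/negP; apply.
Qed.

Lemma uniq_verts1 r : uniq (verts [:: r]).
Proof. exact: (@uniq_verts_cons r [::]). Qed.

Record Ctx (V : finType) (arc : rel V) (k : nat) (u : V) (P : seq V) : Prop := {
  c_path : path arc u P;
  c_uniq : uniq (u :: P);
  c_size : size P = k.+2;
  c_qt : quasi_transitive arc k;
  c_short : forall p m, dipath arc u p (last u P) m -> k.+2 <= m;
  c_k5 : 5 <= k;
  c_odd : odd k }.

Definition xx (V : finType) (u : V) (P : seq V) (m : nat) := nth u (u :: P) m.
Definition E (V : finType) (arc : rel V) (u : V) (P : seq V) (m l : nat) :=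
  arc (xx u P m) (xx u P l).


Lemma fwdE V arc k u P (C : @Ctx V arc k u P) m : m < k.+2 -> E arc u P m m.+1.
Proof.
move=> Hm. have := c_path C. move/(pathP u) => H.
rewrite /E /xx. have := H m; rewrite (c_size C) => /(_ Hm). by [].
Qed.

Lemma xx_inj V arc k u P (C : @Ctx V arc k u P) a b :
  a <= k.+2 -> b <= k.+2 -> xx u P a = xx u P b -> a = b.
Proof.
move=> Ha Hb; rewrite /xx => /eqP; rewrite nth_uniq //; first by move/eqP.
- by rewrite /= (c_size C).
- by rewrite /= (c_size C).
- exact: c_uniq C.
Qed.

Lemma path_seg V arc k u P (C : @Ctx V arc k u P) a l :
  a + l <= k.+2 -> path (E arc u P) a (iota a.+1 l).
Proof.
elim: l a => [|l IH] a Hal //=.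
rewrite (fwdE C) //; last lia. apply: IH; lia.
Qed.

Lemma last_iota a l : last a (iota a.+1 l) = a + l.
Proof. elim: l a => [|l IH] a /=; [lia| rewrite IH; lia]. Qed.

Lemma run_path V arc k u P (C : @Ctx V arc k u P) rs r0 :
  (forall r, r \in r0 :: rs -> r.1 <= r.2 <= k.+2) ->
  path (fun r1 r2 : nat * nat => E arc u P r1.2 r2.1) r0 rs ->
  path (E arc u P) r0.1 (behead (verts (r0 :: rs))) /\
  last r0.1 (behead (verts (r0 :: rs))) = (last r0 rs).2.
Proof.
elim: rs r0 => [|r1 rs IH] r0 Hr Hp.
- have := Hr r0 (mem_head _ _) => /andP [H1 H2].
  rewrite /verts /= cats0 /seg.
  move: H1 H2; case: r0 {Hr Hp} => a b /= H1 H2. split; first by apply: (path_seg C); lia. rewrite last_iota; lia.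
- move: Hp => /= /andP [Hj Hp].
  have Hr' : forall r, r \in r1 :: rs -> r.1 <= r.2 <= k.+2.
    by move=> r Hin; apply: Hr; rewrite inE Hin orbT.
  have [IH1 IH2] := IH r1 Hr' Hp.
  have := Hr r0 (mem_head _ _) => /andP [H1 H2].
  have := Hr' r1 (mem_head _ _) => /andP [H3 H4].
  move: H1 H2 Hj; case: r0 {Hr} => a b /= H1 H2 Hj.
  have Hv : verts (r1 :: rs) = r1.1 :: behead (verts (r1 :: rs)).
    by rewrite /verts /= /seg /=.
  have Hb : behead (verts (r1 :: rs)) = iota r1.1.+1 (r1.2 - r1.1) ++ flatten [seq seg i | i <- rs] by []. rewrite Hb in IH1 IH2. rewrite cat_path last_cat /= last_iota.
  have -> : a + (b - a) = b by lia. rewrite Hj IH1 IH2 andbT; split => //. rewrite andbT; apply: (path_seg C); lia.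
Qed.

Lemma verts_head r0 rs : verts (r0 :: rs) = r0.1 :: behead (verts (r0 :: rs)).
Proof. by []. Qed.

Lemma mem_verts rs z : z \in verts rs -> exists2 r, r \in rs & r.1 <= z <= r.2 \/ z = r.1.
Proof.
move=> /flattenP [s /mapP [r Hr ->]]; rewrite /seg mem_iota => Hz.
exists r => //. move: Hz; case: r {Hr} => a b /= Hz.
case: (leqP a b) => H; [left|right]; lia.
Qed.

Lemma run_dipath V arc k u P (C : @Ctx V arc k u P) rs r0 :
  (forall r, r \in r0 :: rs -> r.1 <= r.2 <= k.+2) ->
  path (fun r1 r2 : nat * nat => E arc u P r1.2 r2.1) r0 rs ->
  uniq (verts (r0 :: rs)) ->
  dipath arc (xx u P r0.1) (map (xx u P) (behead (verts (r0 :: rs))))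
    (xx u P (last r0 rs).2) (size (verts (r0 :: rs))).-1.
Proof.
move=> Hr Hp Hu.
have [H1 H2] := run_path C Hr Hp.
apply/and4P; split.
- by rewrite path_map.
- have -> : xx u P r0.1 :: map (xx u P) (behead (verts (r0 :: rs)))
            = map (xx u P) (verts (r0 :: rs)) by [].
  rewrite map_inj_in_uniq // => a b Ha Hb.
  have [ra Hra Ha'] := mem_verts Ha. have [rb Hrb Hb'] := mem_verts Hb.
  have := Hr _ Hra. have := Hr _ Hrb. move: Ha' Hb'.
  case: ra {Hra} => a1 a2; case: rb {Hrb} => b1 b2 /= Ha' Hb' Hb2 Ha2.
  apply: (xx_inj C); lia.
- by rewrite last_map H2.
- by rewrite size_map.
Qed.

Lemma run_adj V arc k u P (C : @Ctx V arc k u P) rs r0 :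
  (forall r, r \in r0 :: rs -> r.1 <= r.2 <= k.+2) ->
  path (fun r1 r2 : nat * nat => E arc u P r1.2 r2.1) r0 rs ->
  uniq (verts (r0 :: rs)) -> size (verts (r0 :: rs)) = k.+1 ->
  adjacent arc (xx u P r0.1) (xx u P (last r0 rs).2).
Proof.
move=> Hr Hp Hu Hs. have := run_dipath C Hr Hp Hu; rewrite Hs /= => Hd. exact: (c_qt C Hd).
Qed.

Lemma xx0 (V : finType) (u : V) (P : seq V) : xx u P 0 = u. Proof. by []. Qed.
Lemma xxn V arc k u P (C : @Ctx V arc k u P) : xx u P k.+2 = last u P.
Proof. rewrite /xx -(c_size C). clear C. case: P => [|a s] //. have := nth_last u (a :: s). by rewrite /=. Qed.

Lemma no_short V arc k u P (C : @Ctx V arc k u P) a b :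
  a.+1 < b <= k.+2 -> ~~ E arc u P a b.
Proof.
move=> Hab; apply/negP => He.
have Hd := @run_dipath V arc k u P C [:: (b, k.+2)] (0, a).
have /Hd : forall r, r \in [:: (0, a); (b, k.+2)] -> r.1 <= r.2 <= k.+2.
  move=> r; rewrite !inE => /orP [/eqP -> | /eqP ->] /=; lia.
rewrite /= He => /(_ isT).
have /[swap] /[apply] : uniq (verts [:: (0, a); (b, k.+2)]).
  apply: uniq_verts_cons; last exact: uniq_verts1.
  rewrite /= andbT /disj /=; lia.
rewrite xx0 (xxn C) => /(c_short C).
rewrite /verts /seg /= size_cat !size_iota /= cats0 size_iota; lia.
Qed.

Lemma adj_E V arc k u P (C : @Ctx V arc k u P) a b :
  a.+1 < b <= k.+2 ->
  adjacent arc (xx u P a) (xx u P b) \/ adjacent arc (xx u P b) (xx u P a) -> E arc u P b a.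
Proof.
move=> Hab Hadj. have := no_short C Hab. rewrite /E /adjacent in Hadj *.
case: Hadj => /orP [] -> //.
Qed.

Lemma uniq_pairwise rs : pairwise disj rs -> uniq (verts rs).
Proof.
elim: rs => [|r rs IH] //= /andP [H1 H2]. apply: uniq_verts_cons => //. exact: IH.
Qed.

Lemma size_verts rs : size (verts rs) = sumn (map (fun r => (r.2 - r.1).+1) rs).
Proof. elim: rs => [|r rs IH] //=. by rewrite size_cat size_iota IH. Qed.

Lemma runE V arc k u P (C : @Ctx V arc k u P) r0 rs :
  all (fun r => r.1 <= r.2 <= k.+2) (r0 :: rs) ->
  pairwise disj (r0 :: rs) ->
  sumn (map (fun r => (r.2 - r.1).+1) (r0 :: rs)) = k.+1 ->
  path (fun r1 r2 : nat * nat => E arc u P r1.2 r2.1) r0 rs ->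
  (last r0 rs).2.+1 < r0.1 ->
  E arc u P r0.1 (last r0 rs).2.
Proof.
move=> Hv Hd Hs Hp Ho.
have Hr : forall r, r \in r0 :: rs -> r.1 <= r.2 <= k.+2 by move=> r Hr; exact: (allP Hv).
have Hadj := run_adj C Hr Hp (uniq_pairwise Hd) (etrans (size_verts _) Hs).
apply: (adj_E C); last by right.
apply/andP; split => //. have /andP [H1 H2] := Hr r0 (mem_head _ _). exact: leq_trans H1 H2.
Qed.

Lemma fwdF V arc k u P (C : @Ctx V arc k u P) i m : i <= 2 -> m = i + k -> E arc u P m i.
Proof.
move=> Hi ->.
have Hr : forall r, r \in [:: (i, i + k)] -> r.1 <= r.2 <= k.+2.
  by move=> r; rewrite inE => /eqP -> /=; lia.
have := run_adj C Hr isT (uniq_verts1 _).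
rewrite size_verts /= => /(_ ltac:(lia)) Hadj.
have := c_k5 C. move=> Hk. apply: (adj_E C); first lia. by left.
Qed.

Ltac runs C r0 rs :=
  apply: (runE C (r0 := r0) (rs := rs));
  [ rewrite /=; lia | rewrite /= /disj /=; lia | rewrite /=; lia
  | rewrite /= ?andbT; repeat (apply/andP; split) | rewrite /=; lia ].

Lemma Bn0 V arc k u P (C : @Ctx V arc k u P) : E arc u P k.+2 0.
Proof.
have Hk := c_k5 C.
runs C (k.+2, k.+2) [:: (2, k); (0, 0)]; apply: (fwdF C); lia.
Qed.

Lemma B0 V arc k u P (C : @Ctx V arc k u P) m :
  odd m -> 3 <= m <= k.+2 -> E arc u P m 0.
Proof.
have Hk := c_k5 C. have Hko := c_odd C.
elim/ltn_ind: m => m IH Ho Hm.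
have [/eqP ->|H3] := boolP (m == 3).
  runs C (3, k.+2) [:: (0, 0)]. exact: Bn0 C.
have [/eqP ->|Hn] := boolP (m == k.+2). exact: Bn0 C.
runs C (m, k.+1) [:: (1, m - 2); (0, 0)].
- apply: (fwdF C); lia.
- apply: IH; lia.
Qed.

Lemma B1 V arc k u P (C : @Ctx V arc k u P) m :
  ~~ odd m -> 4 <= m <= k.+2 -> E arc u P m 1.
Proof.
have Hk := c_k5 C. have Hko := c_odd C.
elim/ltn_ind: m => m IH Ho Hm.
have [/eqP ->|H3] := boolP (m == 4).
  runs C (4, k.+2) [:: (0, 1)]. exact: Bn0 C.
runs C (m, k.+2) [:: (2, m - 2); (1, 1)].
- apply: (fwdF C); lia.
- apply: IH; lia.
Qed.

Lemma Bn V arc k u P (C : @Ctx V arc k u P) t :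
  ~~ odd t -> t + 3 <= k.+2 -> E arc u P k.+2 t.
Proof.
have Hk := c_k5 C. have Hko := c_odd C.
move=> Ht Htn.
suff H : forall d t, k.+2 - t <= d -> ~~ odd t -> t + 3 <= k.+2 -> E arc u P k.+2 t.
  by apply: (H (k.+2 - t)).
elim=> [|d IH] {Ht Htn} t Hd Ht Htn; first lia.
have [/eqP ->|H0] := boolP (t == 0). exact: Bn0 C.
have [/eqP H3|H3] := boolP (t + 3 == k.+2).
  runs C (k.+2, k.+2) [:: (0, t)]. exact: Bn0 C.
runs C (k.+2, k.+2) [:: (t + 2, k.+1); (1, t)].
- apply: IH; lia.
- apply: (fwdF C); lia.
Qed.

Lemma Bn1 V arc k u P (C : @Ctx V arc k u P) t :
  odd t -> t + 4 <= k.+2 -> E arc u P k.+1 t.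
Proof.
have Hk := c_k5 C. have Hko := c_odd C.
move=> Ht Htn.
suff H : forall d t, k.+2 - t <= d -> odd t -> t + 4 <= k.+2 -> E arc u P k.+1 t.
  by apply: (H (k.+2 - t)).
elim=> [|d IH] {Ht Htn} t Hd Ht Htn; first lia.
have [/eqP H3|H3] := boolP (t + 4 == k.+2).
  runs C (k.+1, k.+2) [:: (0, t)]. exact: Bn0 C.
runs C (k.+1, k.+1) [:: (t + 2, k); (0, t)].
- apply: IH; lia.
- apply: (fwdF C); lia.
Qed.

Lemma Bodd V arc k u P (C : @Ctx V arc k u P) i j :
  odd (j - i) -> i + 3 <= j <= k.+2 -> E arc u P j i.
Proof.
have Hk := c_k5 C. have Hko := c_odd C.
move=> Ho Hij.
have [/eqP Hi|Hi0] := boolP (i == 0). rewrite Hi; apply: (B0 C); lia.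
have [/eqP Hi|Hi1] := boolP (i == 1). rewrite Hi; apply: (B1 C); lia.
have [/eqP Hj|Hjn] := boolP (j == k.+2). rewrite Hj; apply: (Bn C); lia.
have [/eqP Hj|Hjn1] := boolP (j == k.+1). rewrite Hj; apply: (Bn1 C); lia.
have Heven : forall i j, odd (j - i) -> ~~ odd i -> 2 <= i -> i + 3 <= j <= k -> E arc u P j i.
  move=> i' j' Ho' Hi' Hi2 Hj'.
  runs C (j', k.+1) [:: (i'.+1, j'.-1); (1, i')].
  - apply: (Bn1 C); lia.
  - apply: (B1 C); lia.
have [Hie|Hio] := boolP (~~ odd i). apply: Heven; lia.
runs C (j, k.+2) [:: (i.+1, j.-1); (2, i)].
- apply: (Bn C); lia.
- apply: Heven; lia.
Qed.

Lemma H1ofH0 V arc k u P (C : @Ctx V arc k u P) :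
  E arc u P k.+1 0 -> E arc u P k.+2 1.
Proof.
have Hk := c_k5 C. have Hko := c_odd C. move=> H0.
runs C (k.+2, k.+2) [:: (4, k.+1); (0, 1)] => //. apply: (Bodd C); lia.
Qed.

Lemma H0ofH1 V arc k u P (C : @Ctx V arc k u P) :
  E arc u P k.+2 1 -> E arc u P k.+1 0.
Proof.
have Hk := c_k5 C. have Hko := c_odd C. move=> H1.
runs C (k.+1, k.+2) [:: (1, k - 2); (0, 0)] => //. apply: (Bodd C); lia.
Qed.


Lemma A0 V arc k u P (C : @Ctx V arc k u P) m :
  E arc u P k.+1 0 -> 2 <= m <= k.+2 -> E arc u P m 0.
Proof.
have Hk := c_k5 C. have Hko := c_odd C. move=> H0.
elim/ltn_ind: m => m IH Hm.
have [Ho|He] := boolP (odd m). apply: (Bodd C); lia.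
have [/eqP ->|H2] := boolP (m == 2). by runs C (2, k.+1) [:: (0, 0)].
runs C (m, k.+1) [:: (1, m - 2); (0, 0)].
- apply: (Bodd C); lia.
- apply: IH; lia.
Qed.

Lemma A1 V arc k u P (C : @Ctx V arc k u P) m :
  E arc u P k.+1 0 -> 3 <= m <= k.+2 -> E arc u P m 1.
Proof.
have Hk := c_k5 C. have Hko := c_odd C. move=> H0.
have H1 := H1ofH0 C H0.
elim/ltn_ind: m => m IH Hm.
have [He|Ho] := boolP (~~ odd m). apply: (Bodd C); lia.
have [/eqP ->|H2] := boolP (m == 3). by runs C (3, k.+2) [:: (1, 1)].
runs C (m, k.+2) [:: (2, m - 2); (1, 1)].
- apply: (Bodd C); lia.
- apply: IH; lia.
Qed.

Lemma An V arc k u P (C : @Ctx V arc k u P) t :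
  E arc u P k.+1 0 -> t + 2 <= k.+2 -> E arc u P k.+2 t.
Proof.
have Hk := c_k5 C. have Hko := c_odd C. move=> H0.
have H1 := H1ofH0 C H0.
move=> Ht.
suff H : forall d t, k.+2 - t <= d -> t + 2 <= k.+2 -> E arc u P k.+2 t.
  by apply: (H (k.+2 - t)).
elim=> [|d IH] {Ht} t Hd Ht; first lia.
have [He|Ho] := boolP (~~ odd t). apply: (Bodd C); lia.
have [/eqP Hkt|Hkt] := boolP (t == k). by runs C (k.+2, k.+2) [:: (1, t)].
runs C (k.+2, k.+2) [:: (t + 2, k.+1); (1, t)].
- apply: IH; lia.
- apply: (Bodd C); lia.
Qed.

Lemma An1 V arc k u P (C : @Ctx V arc k u P) t :
  E arc u P k.+1 0 -> t + 3 <= k.+2 -> E arc u P k.+1 t.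
Proof.
have Hk := c_k5 C. have Hko := c_odd C. move=> H0.
move=> Ht.
suff H : forall d t, k.+2 - t <= d -> t + 3 <= k.+2 -> E arc u P k.+1 t.
  by apply: (H (k.+2 - t)).
elim=> [|d IH] {Ht} t Hd Ht; first lia.
have [Ho|He] := boolP (odd t). apply: (Bodd C); lia.
have [/eqP Hkt|Hkt] := boolP (t == k.-1). by runs C (k.+1, k.+1) [:: (0, t)].
runs C (k.+1, k.+1) [:: (t + 2, k); (0, t)].
- apply: IH; lia.
- apply: (Bodd C); lia.
Qed.

Lemma Aall V arc k u P (C : @Ctx V arc k u P) i j :
  E arc u P k.+1 0 -> i + 2 <= j <= k.+2 -> E arc u P j i.
Proof.
have Hk := c_k5 C. have Hko := c_odd C. move=> H0 Hij.
have [/eqP Hi|Hi0] := boolP (i == 0). rewrite Hi; apply: (A0 C); lia.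
have [/eqP Hj|Hjn] := boolP (j == k.+2). rewrite Hj; apply: (An C); lia.
have [/eqP Hi|Hi3] := boolP (i + 3 == k.+2).
  have -> : j = k.+1 by lia. apply: (An1 C); lia.
have [/eqP Hj|Hj3] := boolP (j == 3).
  have -> : i = 1 by lia. rewrite Hj; apply: (A1 C); lia.
runs C (j, k.+1) [:: (i.+1, j.-1); (1, i)].
- apply: (An1 C); lia.
- apply: (A1 C); lia.
Qed.

Lemma BE0 V arc k u P (C : @Ctx V arc k u P) y :
  ~~ odd y -> 2 <= y <= k.+1 -> E arc u P y 0 -> E arc u P k.+1 0.
Proof.
have Hk := c_k5 C. have Hko := c_odd C.
move=> Hy Hyk He.
suff H : forall d y, k.+1 - y <= d -> ~~ odd y -> 2 <= y <= k.+1 -> E arc u P y 0 ->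
  E arc u P k.+1 0 by apply: (H (k.+1 - y) y).
elim=> [|d IH] {Hy Hyk He y} y Hd Hy Hyk He.
  by have -> : k.+1 = y by lia.
have [/eqP Hyk1|Hyk1] := boolP (y == k.+1). by rewrite -Hyk1.
apply: (IH y.+2); try lia.
runs C (y.+2, k.+1) [:: (1, y); (0, 0)] => //. apply: (Bodd C); lia.
Qed.

Lemma BE1 V arc k u P (C : @Ctx V arc k u P) y :
  odd y -> 3 <= y <= k.+2 -> E arc u P y 1 -> E arc u P k.+1 0.
Proof.
have Hk := c_k5 C. have Hko := c_odd C.
move=> Hy Hyk He. apply: (H0ofH1 C).
suff H : forall d y, k.+2 - y <= d -> odd y -> 3 <= y <= k.+2 -> E arc u P y 1 ->
  E arc u P k.+2 1 by apply: (H (k.+2 - y) y).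
elim=> [|d IH] {Hy Hyk He y} y Hd Hy Hyk He.
  by have -> : k.+2 = y by lia.
have [/eqP Hyk1|Hyk1] := boolP (y == k.+2). by rewrite -Hyk1.
apply: (IH y.+2); try lia.
runs C (y.+2, k.+2) [:: (2, y); (1, 1)] => //. apply: (Bodd C); lia.
Qed.

Lemma BEn V arc k u P (C : @Ctx V arc k u P) t :
  odd t -> t + 2 <= k.+2 -> E arc u P k.+2 t -> E arc u P k.+1 0.
Proof.
have Hk := c_k5 C. have Hko := c_odd C.
move=> Ht Htk He. apply: (H0ofH1 C).
elim/ltn_ind: t Ht Htk He => t IH Ht Htk He.
have [/eqP Ht1|Ht1] := boolP (t == 1). by rewrite -Ht1.
apply: (IH (t - 2)); try lia.
runs C (k.+2, k.+2) [:: (t, k.+1); (1, t - 2)] => //. apply: (Bodd C); lia.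
Qed.

Lemma BEn1 V arc k u P (C : @Ctx V arc k u P) t :
  ~~ odd t -> t + 3 <= k.+2 -> E arc u P k.+1 t -> E arc u P k.+1 0.
Proof.
have Hk := c_k5 C. have Hko := c_odd C.
move=> Ht Htk He.
elim/ltn_ind: t Ht Htk He => t IH Ht Htk He.
have [/eqP Ht1|Ht1] := boolP (t == 0). by rewrite -Ht1.
apply: (IH (t - 2)); try lia.
runs C (k.+1, k.+1) [:: (t, k); (0, t - 2)] => //. apply: (Bodd C); lia.
Qed.

Lemma Even_H0 V arc k u P (C : @Ctx V arc k u P) i j :
  ~~ odd (j - i) -> i + 2 <= j <= k.+2 -> E arc u P j i -> E arc u P k.+1 0.
Proof.
have Hk := c_k5 C. have Hko := c_odd C.
elim/ltn_ind: i j => i IH j Hp Hij He.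
have [/eqP Hi|Hi0] := boolP (i == 0). apply: (BE0 C (y := j)); try lia. by rewrite -Hi.
have [/eqP Hi|Hi1] := boolP (i == 1). apply: (BE1 C (y := j)); try lia. by rewrite -Hi.
have [/eqP Hj|Hjn] := boolP (j == k.+2). apply: (BEn C (t := i)); try lia. by rewrite -Hj.
have [/eqP Hj|Hjn1] := boolP (j == k.+1). apply: (BEn1 C (t := i)); try lia. by rewrite -Hj.
have [Hjk|Hjk] := boolP (j <= k.-1).
  apply: (IH i.-1 _ j.+3); try lia.
  pose r := if odd i then i else i.+1.
  have Hr : odd r /\ i <= r <= i.+1 by rewrite /r; case: ifP => H; split => //; lia.
  case: Hr => Hr1 Hr2.
  runs C (j.+3, k.+2) [:: (r.+1, j); (i, r); (0, i.-1)] => //.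
  - apply: (Bodd C); lia.
  - apply: (B0 C); lia.
have Hjk' : j = k by lia.
have [/eqP Hik|Hik] := boolP (i == k - 2).
  apply: (BEn1 C (t := k - 5)); try lia.
  runs C (k.+1, k.+2) [:: (k.-1, k); (k - 2, k - 2); (0, k - 5)].
  - apply: (Bodd C); lia.
  - by rewrite -Hik -[X in E _ _ _ X _]Hjk'.
  - apply: (Bodd C); lia.
apply: (BEn1 C (t := i.-1)); try lia.
runs C (k.+1, k.+1) [:: (i.+2, k); (i, i.+1); (1, i.-1)].
- apply: (Bodd C); lia.
- by rewrite -Hjk'.
- apply: (Bodd C); lia.
Qed.
Unset Implicit Arguments.
Theorem theorem2p5 (V : finType) (arc : rel V) (k : nat)
  (Hloop : irreflexive arc)
  (Hkodd : odd k) (Hk5 : 5 <= k)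
  (Hstrong : strong arc) (Hqt : quasi_transitive arc k)
  (Hdiam : diam_ge arc k.+2)
  (u v : V) (Huv : dist_is arc u v k.+2)
  (P : seq V) (HP : dipath arc u P v k.+2) :
  semicomplete_on arc (u :: P) \/ semicomplete_bipartite_on arc (u :: P).
Proof.
have /and4P [Hp Hu /eqP Hl /eqP Hs] := HP.
have C : Ctx arc k u P.
  split => //. move=> p m; rewrite Hl. exact: (proj2 Huv).
have Hidx : forall x, x \in u :: P -> index x (u :: P) <= k.+2 /\ xx u P (index x (u :: P)) = x.
  move=> x Hx; split; last by rewrite /xx nth_index.
  have := Hx; rewrite -index_mem /= Hs. by [].
have [Hex|Hnex] := boolP [exists i : 'I_k.+3, exists j : 'I_k.+3,
                            ~~ odd (j - i) && (i + 2 <= j) && E arc u P j i].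
- left. move: Hex => /existsP [i /existsP [j /andP [/andP [H1 H2] H3]]].
  have H0 := Even_H0 C H1 (ltac:(have := ltn_ord j; lia)) H3.
  move=> x y Hx Hy Hxy.
  have [Ha Hxa] := Hidx x Hx. have [Hb Hyb] := Hidx y Hy.
  move: Ha Hb Hxa Hyb Hxy.
  move: (index x (u :: P)) (index y (u :: P)) => a b Ha Hb <- <- Hxy.
  rewrite /adjacent.
  case: (ltngtP a b) => Hab.
  + have [/eqP Hab1|Hab1] := boolP (a.+1 == b).
      apply/orP; left; rewrite -Hab1; apply: (fwdE C); lia.
    apply/orP; right; apply: (Aall C) => //; lia.
  + have [/eqP Hab1|Hab1] := boolP (b.+1 == a).
      apply/orP; right; rewrite -Hab1; apply: (fwdE C); lia.
    apply/orP; left; apply: (Aall C) => //; lia.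
  + by rewrite Hab eqxx in Hxy.
- right. exists (fun z => odd (index z (u :: P))).
  move=> x y Hx Hy.
  have [Ha Hxa] := Hidx x Hx. have [Hb Hyb] := Hidx y Hy.
  move: Ha Hb Hxa Hyb.
  move: (index x (u :: P)) (index y (u :: P)) => a b Ha Hb <- <-.
  split.
  + move=> /eqP Hpar.
    case: (ltngtP a b) => Hab.
    * apply: (no_short C). lia.
    * apply/negP => He. move/negP: Hnex; apply.
      apply/existsP; exists (Ordinal (n := k.+3) (m := b) (ltac:(lia))).
      apply/existsP; exists (Ordinal (n := k.+3) (m := a) (ltac:(lia))).
      rewrite /= /E He andbT. apply/andP; split; lia.
    * by rewrite Hab Hloop.
  + move=> Hpar. rewrite /adjacent.
    case: (ltngtP a b) => Hab.
    * have [/eqP Hab1|Hab1] := boolP (a.+1 == b).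
        apply/orP; left; rewrite -Hab1; apply: (fwdE C); lia.
      apply/orP; right; apply: (Bodd C); lia.
    * have [/eqP Hab1|Hab1] := boolP (b.+1 == a).
        apply/orP; right; rewrite -Hab1; apply: (fwdE C); lia.
      apply/orP; left; apply: (Bodd C); lia.
    * by rewrite Hab eqxx in Hpar.
Qed.
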